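(* Let $c>0$, $T_{\max}>0$, let $M,K\ge1$ be integers and $\bm{r}^{\mathrm{mic}}_1,\dots,\bm{r}^{\mathrm{mic}}_M\in\mathbb{R}^3$ with $E_M=\{\bm{r}^{\mathrm{mic}}_m\}$. Let $\kappa:\mathbb{R}\to\mathbb{R}$ be continuous with $\kappa(0)>0$ and $\lim_{|t|\to+\infty}\kappa(t)=0$, and assume $$\forall\tau\in[0,T_{\max}],\qquad\int_0^{T_{\max}}\kappa(t-\tau)\,dt>0.$$ Then there exists $N'\in\mathbb{N}^*$ such that for all integers $N\ge N'$ and $f_s>0$ with $T_{\max}=(N-1)/f_s$, the operator $\Gamma^K$ (built with these $N$ and $f_s$) is amplitude lower-bounded, i.e. there is $C>0$ with $\|\Gamma^K(\bm{a},\bm{r})\|_2\ge C\sum_{k=1}^K a_k$ for all $(\bm{a},\bm{r})\in\mathbb{R}_+^K\times\mathscr{C}^K$.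
   Context: $\mathbb{R}_+=[0,+\infty)$, $\|\cdot\|_2$ is the Euclidean norm. Given $N$ and $f_s$, for $\bm{r}\in\mathbb{R}^3\setminus E_M$, $\gamma(\bm{r})\in\mathbb{R}^{MN}$ has components $\gamma_{m,n}(\bm{r})=\dfrac{\kappa\big(n/f_s-\|\bm{r}-\bm{r}^{\mathrm{mic}}_m\|_2/c\big)}{4\pi\|\bm{r}-\bm{r}^{\mathrm{mic}}_m\|_2}$, $1\le m\le M$, $0\le n\le N-1$. $\mathscr{C}=\bigcap_{m=1}^M\overline{B(\bm{r}^{\mathrm{mic}}_m,cT_{\max})}\setminus E_M$. $\Gamma^K(\bm{a},\bm{r})=\sum_{k=1}^K a_k\gamma(\bm{r}_k)$. *)

(* Defs.v *)
From Stdlib Require Import Reals Lra List.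
From Coquelicot Require Import Coquelicot.
Import ListNotations.
Open Scope R_scope.

Definition pt : Type := (R * R * R)%type.

Definition dist3 (p q : pt) : R :=
  let '(x1, y1, z1) := p in
  let '(x2, y2, z2) := q in
  sqrt ((x1 - x2) ^ 2 + (y1 - y2) ^ 2 + (z1 - z2) ^ 2).

Definition fsum (n : nat) (f : nat -> R) : R :=
  fold_right Rplus 0 (map f (seq 0 n)).

(* gamma_{m,n}(r), microphones indexed 0..M-1 (paper: 1..M). *)
Definition gamma_mn (c fs : R) (kappa : R -> R) (mic : nat -> pt)
    (m n : nat) (r : pt) : R :=
  kappa (INR n / fs - dist3 r (mic m) / c) / (4 * PI * dist3 r (mic m)).

(* || Gamma^K(a, r) ||_2, the Euclidean norm in R^{MN};
   sources indexed 0..K-1. *)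
Definition GammaK_norm (c fs : R) (kappa : R -> R) (M N K : nat)
    (mic : nat -> pt) (a : nat -> R) (r : nat -> pt) : R :=
  sqrt (fsum M (fun m => fsum N (fun n =>
          (fsum K (fun k => a k * gamma_mn c fs kappa mic m n (r k))) ^ 2))).

Definition in_Cset (c Tmax : R) (M : nat) (mic : nat -> pt) (p : pt) : Prop :=
  (forall m, (m < M)%nat -> dist3 p (mic m) <= c * Tmax) /\
  (forall m, (m < M)%nat -> p <> mic m).

(* Main.v *)
Require Import Defs.
From Stdlib Require Import Reals Lra Lia List.
From Coquelicot Require Import Coquelicot.
Open Scope R_scope.

Lemma fsum_S n f : fsum (S n) f = fsum n f + f n.
Proof.
  unfold fsum. rewrite seq_S, map_app, fold_right_app. simpl.
  generalize (f n). induction (map f (seq 0 n)) as [|x l IH]; intros y; simpl.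
  - lra.
  - rewrite IH. lra.
Qed.

Lemma fsum_0 f : fsum 0 f = 0.
Proof. reflexivity. Qed.

Lemma fsum_le n f g : (forall i, (i < n)%nat -> f i <= g i) -> fsum n f <= fsum n g.
Proof.
  induction n; intros H. rewrite !fsum_0; lra.
  rewrite !fsum_S. assert (f n <= g n) by (apply H; lia).
  assert (fsum n f <= fsum n g) by (apply IHn; intros; apply H; lia). lra.
Qed.

Lemma fsum_ext n f g : (forall i, (i < n)%nat -> f i = g i) -> fsum n f = fsum n g.
Proof.
  intros H; apply Rle_antisym; apply fsum_le; intros i Hi; rewrite H; auto; lra.
Qed.

Lemma fsum_scal n c f : fsum n (fun i => c * f i) = c * fsum n f.
Proof. induction n. rewrite !fsum_0; ring. rewrite !fsum_S, IHn; ring. Qed.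

Lemma fsum_plus n f g : fsum n (fun i => f i + g i) = fsum n f + fsum n g.
Proof. induction n. rewrite !fsum_0; ring. rewrite !fsum_S, IHn; ring. Qed.

Lemma fsum_const n c : fsum n (fun _ => c) = INR n * c.
Proof. induction n. rewrite !fsum_0; simpl; ring. rewrite !fsum_S, IHn, S_INR; ring. Qed.

Lemma fsum_comm n k f : fsum n (fun i => fsum k (fun j => f i j)) = fsum k (fun j => fsum n (fun i => f i j)).
Proof.
  induction n. rewrite fsum_0. rewrite (fsum_ext k _ (fun _ => 0)) by (intros; apply fsum_0).
  rewrite fsum_const; ring.
  rewrite fsum_S, IHn, <- fsum_plus. apply fsum_ext; intros; rewrite fsum_S; ring.
Qed.

Lemma fsum_nonneg n f : (forall i, (i < n)%nat -> 0 <= f i) -> 0 <= fsum n f.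
Proof.
  intros H. rewrite <- (Rmult_0_r (INR n)), <- fsum_const. apply fsum_le; auto.
Qed.

Lemma fsum_term_le n f j : (forall i, (i < n)%nat -> 0 <= f i) -> (j < n)%nat -> f j <= fsum n f.
Proof.
  induction n; intros H Hj. lia.
  rewrite fsum_S. destruct (Nat.eq_dec j n).
  - subst. assert (0 <= fsum n f) by (apply fsum_nonneg; intros; apply H; lia). lra.
  - assert (f j <= fsum n f) by (apply IHn; [intros; apply H; lia| lia]).
    assert (0 <= f n) by (apply H; lia). lra.
Qed.

Lemma cont_shift (g : R -> R) (tau : R) : (forall x, continuous g x) -> forall x, continuous (fun t => g (t - tau)) x.
Proof.
  intros Hg x. apply (continuous_comp (fun t => t - tau) g).
  - apply (continuous_minus (V := R_NormedModule) (fun t => t) (fun _ => tau)).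
    apply continuous_id. apply continuous_const.
  - apply Hg.
Qed.

Lemma riemann (g : R -> R) (h eps L : R) (k : nat) :
  0 < h -> (forall x, continuous g x) ->
  (forall t s, 0 <= t <= L -> 0 <= s <= L -> Rabs (t - s) <= h -> Rabs (g t - g s) <= eps) ->
  INR k * h <= L ->
  Rabs (RInt g 0 (INR k * h) - h * fsum k (fun n => g (INR n * h))) <= INR k * h * eps.
Proof.
  intros Hh Hg Hu. induction k; intros HL.
  - simpl. rewrite Rmult_0_l, RInt_point, fsum_0. unfold zero; simpl.
    rewrite Rmult_0_r, Rminus_0_r, Rabs_R0. lra.
  - rewrite S_INR in *. rewrite fsum_S.
    assert (Hk0 : 0 <= INR k) by apply pos_INR.
    assert (IH : Rabs (RInt g 0 (INR k * h) - h * fsum k (fun n => g (INR n * h))) <= INR k * h * eps) by (apply IHk; nra).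
    assert (Hex : forall a b, ex_RInt g a b) by (intros; apply (ex_RInt_continuous (V:=R_CompleteNormedModule)); auto).
    rewrite <- (RInt_Chasles g 0 (INR k * h) ((INR k + 1) * h)) by auto.
    set (a := INR k * h). 
    assert (Hp : Rabs (RInt g a ((INR k + 1) * h) - h * g a) <= h * eps).
    { assert (E : RInt g a ((INR k + 1) * h) - h * g a = RInt (fun t => g t - g a) a ((INR k + 1) * h)).
      { rewrite (RInt_minus g (fun _ => g a)) by (auto; apply ex_RInt_const).
        rewrite RInt_const. unfold minus, plus, opp, scal; simpl. unfold mult; simpl. unfold a; ring. }
      rewrite E.
      replace (h * eps) with (((INR k + 1) * h - a) * eps) by (unfold a; ring).
      apply abs_RInt_le_const.
      - unfold a; nra.
      - apply (ex_RInt_minus (V := R_NormedModule)); auto. apply ex_RInt_const.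
      - intros t Ht. apply Hu; unfold a in *; try split; try nra.
        rewrite Rabs_right; nra. }
    unfold plus; simpl.
    replace (RInt g 0 a + RInt g a ((INR k + 1) * h) - h * (fsum k (fun n : nat => g (INR n * h)) + g (INR k * h)))
      with ((RInt g 0 a - h * fsum k (fun n : nat => g (INR n * h))) + (RInt g a ((INR k + 1) * h) - h * g a)) by (unfold a; ring).
    fold a in IH.
    pose proof (Rabs_triang (RInt g 0 a - h * fsum k (fun n : nat => g (INR n * h))) (RInt g a ((INR k + 1) * h) - h * g a)).
    replace ((INR k + 1) * h * eps) with (a * eps + h * eps) by (unfold a; ring).
    match goal with |- Rabs ?X <= _ => replace X with ((RInt g 0 a - h * fsum k (fun n : nat => g (INR n * h))) + (RInt g a ((INR k + 1) * h) - h * g a)) by ring end.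
    lra.
Qed.

Lemma F_eq (kappa : R -> R) Tmax tau : (forall x, continuous kappa x) ->
  RInt (fun t => kappa (t - tau)) 0 Tmax = RInt kappa (- tau) (Tmax - tau).
Proof.
  intros Hk.
  assert (E := RInt_comp_lin kappa 1 (- tau) 0 Tmax).
  replace (1 * 0 + - tau) with (- tau) in E by ring.
  replace (1 * Tmax + - tau) with (Tmax - tau) in E by ring.
  rewrite <- E.
  - apply RInt_ext. intros x _. unfold scal; simpl; unfold mult; simpl.
    replace (1 * x + - tau) with (x - tau) by ring. ring.
  - apply (ex_RInt_continuous (V:=R_CompleteNormedModule)); auto.
Qed.

Lemma F_cont (kappa : R -> R) Tmax : (forall x, continuous kappa x) ->
  forall tau, continuity_pt (fun tau => RInt kappa (- tau) (Tmax - tau)) tau.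
Proof.
  intros Hk tau. apply continuity_pt_filterlim.
  apply (continuous_comp_2 (fun t => - t) (fun t => Tmax - t) (fun a b => RInt kappa a b)).
  - apply (continuous_opp (V := R_NormedModule) (fun t => t)). apply continuous_id.
  - apply (continuous_minus (V := R_NormedModule) (fun _ => Tmax) (fun t => t)).
    apply continuous_const. apply continuous_id.
  - apply (continuous_RInt (V := R_NormedModule) kappa _ _ (fun a b => RInt kappa a b)).
    apply filter_forall. intros z. apply (RInt_correct (V:=R_CompleteNormedModule)).
    apply (ex_RInt_continuous (V:=R_CompleteNormedModule)); auto.
Qed.

Lemma core Tmax (kappa : R -> R) : 0 < Tmax -> (forall x, continuous kappa x) ->
  (forall tau, 0 <= tau <= Tmax -> 0 < RInt (fun t => kappa (t - tau)) 0 Tmax) ->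
  exists N0 d, (2 <= N0)%nat /\ 0 < d /\
   forall N fs, (N0 <= N)%nat -> 0 < fs -> Tmax = (INR N - 1) / fs ->
   forall tau, 0 <= tau <= Tmax -> fsum N (fun n => kappa (INR n / fs - tau)) >= d * fs.
Proof.
  intros HT Hk Hpos.
  destruct (continuity_ab_min (fun tau => RInt kappa (- tau) (Tmax - tau)) 0 Tmax)
    as [mx [Hmx Hmx']]; [lra | intros; apply F_cont; auto |].
  set (m := RInt kappa (- mx) (Tmax - mx)) in *.
  assert (Hm : 0 < m) by (unfold m; rewrite <- F_eq by auto; apply Hpos; auto).
  assert (Hkc : forall x, continuity_pt kappa x) by (intros; apply continuity_pt_filterlim, Hk).
  destruct (continuity_ab_maj (fun x => Rabs (kappa x)) (- Tmax) Tmax) as [Mx [HMx _]];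
    [lra | intros; apply continuity_pt_filterlim, continuous_Rabs_comp, Hk |].
  set (B := Rabs (kappa Mx) + 1).
  assert (HB0 : 0 < B) by (unfold B; pose proof (Rabs_pos (kappa Mx)); lra).
  assert (HB : forall x, - Tmax <= x <= Tmax -> Rabs (kappa x) <= B)
    by (intros x Hx; specialize (HMx x Hx); simpl in HMx; unfold B; lra).
  assert (Heps : 0 < m / (4 * Tmax)) by (apply Rdiv_lt_0_compat; lra).
  destruct (Heine_cor2 (f:=kappa) (a:=- Tmax) (b:=Tmax) (fun x _ => Hkc x) (mkposreal _ Heps)) as [[delta Hd] Hdelta].
  simpl in Hdelta, Hd.
  set (eta := Rmin (delta / Tmax) (m / (4 * B * Tmax))).
  assert (Heta : 0 < eta).
  { unfold eta. apply Rmin_glb_lt; apply Rdiv_lt_0_compat; try lra.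
    apply Rmult_lt_0_compat; lra. }
  assert (Heta1 : eta * Tmax <= delta).
  { assert (eta <= delta / Tmax) by apply Rmin_l.
    apply (Rmult_le_compat_r Tmax) in H; [|lra]. unfold Rdiv in H.
    rewrite Rmult_assoc, Rinv_l, Rmult_1_r in H; lra. }
  assert (Heta2 : eta * Tmax * B <= m / 4).
  { assert (eta <= m / (4 * B * Tmax)) by apply Rmin_r.
    apply (Rmult_le_compat_r (Tmax * B)) in H; [|nra].
    replace (m / (4 * B * Tmax) * (Tmax * B)) with (m / 4) in H by (field; lra). lra. }
  destruct (archimed_cor1 eta Heta) as [n0 [Hn0 Hn0p]].
  exists (S n0), (m / 2). split; [lia|]. split; [lra|].
  intros N fs HN Hfs HTN tau Htau.
  destruct N as [|k]; [lia|].
  rewrite S_INR in HTN. replace (INR k + 1 - 1) with (INR k) in HTN by ring.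
  set (h := / fs).
  assert (Hh : 0 < h) by (apply Rinv_0_lt_compat; auto).
  assert (HTk : Tmax = INR k * h) by (rewrite HTN; reflexivity).
  assert (Hkn : INR n0 <= INR k) by (apply le_INR; lia).
  assert (Hn0pos : 0 < INR n0) by (apply lt_0_INR; auto).
  assert (H1 : 1 < eta * INR n0).
  { apply (Rmult_lt_compat_r (INR n0)) in Hn0; auto. rewrite Rinv_l in Hn0; lra. }
  assert (Hhd : h < eta * Tmax) by nra.
  assert (HR := riemann (fun t => kappa (t - tau)) h (m / (4 * Tmax)) Tmax k Hh (cont_shift kappa tau Hk)).
  rewrite <- HTk in HR.
  assert (HR' : Rabs (RInt (fun t => kappa (t - tau)) 0 Tmax - h * fsum k (fun n => kappa (INR n * h - tau))) <= Tmax * (m / (4 * Tmax))).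
  { apply HR; [|lra]. intros t s Ht Hs Hts. left.
    apply Hdelta; [lra|lra|]. replace (t - tau - (s - tau)) with (t - s) by ring. lra. }
  replace (Tmax * (m / (4 * Tmax))) with (m / 4) in HR' by (field; lra).
  assert (HF : m <= RInt (fun t => kappa (t - tau)) 0 Tmax) by (rewrite F_eq by auto; apply Hmx; auto).
  assert (Hlast : Rabs (kappa (INR k * h - tau)) <= B) by (apply HB; lra).
  rewrite fsum_S.
  change (fsum k (fun n => kappa (INR n / fs - tau))) with (fsum k (fun n => kappa (INR n * h - tau))).
  change (INR k / fs) with (INR k * h).
  set (S := fsum k (fun n => kappa (INR n * h - tau))) in *.
  set (X := kappa (INR k * h - tau)) in *.
  assert (h * (S + X) >= m / 2).
  { apply Rabs_le_between in HR'. apply Rabs_le_between in Hlast.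
    assert (h * B <= m / 4) by nra. nra. }
  assert (Hfh : fs * h = 1) by (unfold h; field; lra).
  apply Rle_ge. apply Rge_le in H.
  apply (Rmult_le_compat_l fs) in H; [|lra].
  rewrite <- Rmult_assoc, Hfh in H. lra.
Qed.

Lemma dist3_pos p q : p <> q -> 0 < dist3 p q.
Proof.
  destruct p as [[x1 y1] z1], q as [[x2 y2] z2]. simpl. intros Hne.
  destruct (Rle_lt_or_eq_dec 0 (sqrt ((x1 - x2) ^ 2 + (y1 - y2) ^ 2 + (z1 - z2) ^ 2))) as [H|H];
    [apply sqrt_pos| auto |].
  exfalso. symmetry in H. assert (Hnn : 0 <= (x1 - x2) ^ 2 + (y1 - y2) ^ 2 + (z1 - z2) ^ 2) by (pose proof (pow2_ge_0 (x1-x2)); pose proof (pow2_ge_0 (y1-y2)); pose proof (pow2_ge_0 (z1-z2)); lra). apply (sqrt_eq_0 _ Hnn) in H.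
  apply Hne. pose proof (pow2_ge_0 (x1-x2)); pose proof (pow2_ge_0 (y1-y2)); pose proof (pow2_ge_0 (z1-z2)).
  assert (x1 = x2) by (apply Rminus_diag_uniq; apply Rsqr_0_uniq; rewrite Rsqr_pow2; lra).
  assert (y1 = y2) by (apply Rminus_diag_uniq; apply Rsqr_0_uniq; rewrite Rsqr_pow2; lra).
  assert (z1 = z2) by (apply Rminus_diag_uniq; apply Rsqr_0_uniq; rewrite Rsqr_pow2; lra). subst; auto.
Qed.

Theorem corollary2 (c Tmax : R) (M K : nat) (mic : nat -> pt) (kappa : R -> R) :
  0 < c -> 0 < Tmax -> (1 <= M)%nat -> (1 <= K)%nat ->
  (forall x, continuous kappa x) ->
  0 < kappa 0 ->
  is_lim kappa p_infty (Finite 0) -> is_lim kappa m_infty (Finite 0) ->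
  (forall tau, 0 <= tau <= Tmax ->
     0 < RInt (fun t => kappa (t - tau)) 0 Tmax) ->
  exists N' : nat, (1 <= N')%nat /\
    forall (N : nat) (fs : R), (N' <= N)%nat -> 0 < fs ->
      Tmax = (INR N - 1) / fs ->
      exists C : R, 0 < C /\
        forall (a : nat -> R) (r : nat -> pt),
          (forall k, (k < K)%nat -> 0 <= a k) ->
          (forall k, (k < K)%nat -> in_Cset c Tmax M mic (r k)) ->
          GammaK_norm c fs kappa M N K mic a r >= C * fsum K a.
Proof.
  intros Hc HT HM HK Hk _ _ _ Hpos.
  destruct (core Tmax kappa HT Hk Hpos) as [N0 [d [HN0 [Hd Hcore]]]].
  exists N0. split; [lia|].
  intros N fs HN Hfs HTN.
  assert (HNpos : 0 < INR N) by (apply lt_0_INR; lia).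
  set (L := d * fs / (4 * PI * (c * Tmax))).
  assert (HL : 0 < L).
  { unfold L. apply Rdiv_lt_0_compat. nra. pose proof PI_RGT_0. apply Rmult_lt_0_compat; nra. }
  exists (L / INR N). split; [apply Rdiv_lt_0_compat; auto|].
  intros a r Ha Hr.
  set (V := fun m n => fsum K (fun k => a k * gamma_mn c fs kappa mic m n (r k))).
  set (Q := sqrt (fsum N (fun n => V 0%nat n ^ 2))).
  assert (HQ : Q <= GammaK_norm c fs kappa M N K mic a r).
  { unfold GammaK_norm, Q. apply sqrt_le_1_alt.
    apply (fsum_term_le M (fun m => fsum N (fun n => V m n ^ 2)) 0%nat); [|lia].
    intros; apply fsum_nonneg; intros; apply pow2_ge_0. }
  assert (HV : fsum N (fun n => V 0%nat n) <= INR N * Q).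
  { rewrite <- fsum_const. apply fsum_le. intros n Hn.
    apply Rle_trans with (Rabs (V 0%nat n)); [apply Rle_abs|].
    rewrite <- sqrt_Rsqr_abs. unfold Q. apply sqrt_le_1_alt.
    rewrite Rsqr_pow2.
    apply (fsum_term_le N (fun n => V 0%nat n ^ 2)); auto. intros; apply pow2_ge_0. }
  assert (HS : L * fsum K a <= fsum N (fun n => V 0%nat n)).
  { unfold V. rewrite fsum_comm. rewrite <- fsum_scal. apply fsum_le. intros k Hk'.
    rewrite fsum_scal. rewrite Rmult_comm. apply Rmult_le_compat_l; [apply Ha; auto|].
    destruct (Hr k Hk') as [Hr1 Hr2].
    set (D := dist3 (r k) (mic 0%nat)).
    assert (HD : 0 < D) by (apply dist3_pos, Hr2; lia).
    assert (HD2 : D <= c * Tmax) by (apply Hr1; lia).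
    unfold gamma_mn. fold D.
    rewrite (fsum_ext N _ (fun n => / (4 * PI * D) * kappa (INR n / fs - D / c)))
      by (intros; unfold Rdiv; ring).
    rewrite fsum_scal.
    assert (Htau : 0 <= D / c <= Tmax).
    { split. apply Rlt_le, Rdiv_lt_0_compat; lra.
      apply (Rmult_le_reg_r c); [lra|]. unfold Rdiv. rewrite Rmult_assoc, Rinv_l by lra. lra. }
    specialize (Hcore N fs HN Hfs HTN (D / c) Htau).
    pose proof PI_RGT_0.
    assert (Hinv : / (4 * PI * (c * Tmax)) <= / (4 * PI * D)).
    { apply Rinv_le_contravar; nra. }
    unfold L. unfold Rdiv.
    apply Rle_trans with (/ (4 * PI * D) * (d * fs)).
    - rewrite Rmult_comm. apply Rmult_le_compat_r; [nra|]. auto.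
    - apply Rmult_le_compat_l; [left; apply Rinv_0_lt_compat; nra| lra]. }
  apply Rle_ge. apply Rle_trans with Q; [|auto].
  apply (Rmult_le_reg_l (INR N)); auto.
  replace (INR N * (L / INR N * fsum K a)) with (L * fsum K a) by (field; lra). lra.
Qed.
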